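(* Let $T$ be a complete theory with monster model $\mathcal{U}$, $A\subseteq\mathcal{U}$ small, and $\mu\in\mathfrak{M}_x(\mathcal{U})$, $\nu\in\mathfrak{M}_y(\mathcal{U})$, $\eta\in\mathfrak{M}_z(\mathcal{U})$ (with $x,y,z$ pairwise disjoint). If $\mu\geq_{\mathbb{E},A}\nu$ and $\nu\geq_{\mathbb{E},A}\eta$, then $\mu\geq_{\mathbb{E},A}\eta$.
   Context: For $B\subseteq\mathcal{U}$, $\mathcal{L}_x(B)$ is the Boolean algebra of formulas in $x$ with parameters from $B$ modulo $T$, embedded in $\mathcal{L}_{xy}(B)$ via $\varphi(x)\mapsto\varphi(x)\wedge y=y$; $\mathfrak{M}_x(B)$ is the set of finitely additive probability measures on $\mathcal{L}_x(B)$. For $\omega\in\mathfrak{M}_{xy}(B)$, $\pi_x(\omega)(\varphi(x))=\omega(\varphi(x)\wedge y=y)$ (similarly $\pi_y$); $\omega|_C$ is restriction. For $\mu\in\mathfrak{M}_x(\mathcal{U})$, $\nu\in\mathfrak{M}_y(\mathcal{U})$: $\mu\geq_{\mathbb{E},A}\nu$ means there is $\lambda\in\mathfrak{M}_{xy}(A)$ with $\pi_x(\lambda)=\mu|_A$ such that every $\omega\in\mathfrak{M}_{xy}(\mathcal{U})$ with $\omega|_A=\lambda$ and $\pi_x(\omega)=\mu$ satisfies $\pi_y(\omega)=\nu$ (analogously for other pairs of variable tuples). *)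

(* Defs.v *)
From mathcomp Require Import all_boot.
From Stdlib Require Import Reals.

Set Implicit Arguments.
Unset Strict Implicit.
Unset Printing Implicit Defensive.

Record language := Language {
  fsym : Type; fari : fsym -> nat;
  rsym : Type; rari : rsym -> nat }.

Record structure (L : language) := Structure {
  carrier :> Type;
  ifun : forall f : fsym L, ('I_(fari f) -> carrier) -> carrier;
  irel : forall r : rsym L, ('I_(rari r) -> carrier) -> Prop }.

Section Syntax.
Variables (L : language) (M : Type).

Inductive term : Type :=
  | Var : nat -> term
  | Par : M -> term
  | App : forall f : fsym L, ('I_(fari f) -> term) -> term.

Inductive formula : Type :=
  | Eq : term -> term -> formula
  | Rel : forall r : rsym L, ('I_(rari r) -> term) -> formula
  | Bot : formula
  | Neg : formula -> formula
  | And : formula -> formula -> formula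
  | Ex : nat -> formula -> formula.

Definition Top : formula := Neg Bot.
Definition Or (p q : formula) : formula := Neg (And (Neg p) (Neg q)).

Fixpoint tfree (v : nat) (t : term) : Prop :=
  match t with
  | Var w => v = w
  | Par _ => False
  | App f a => exists i, tfree v (a i)
  end.

Fixpoint ffree (v : nat) (p : formula) : Prop :=
  match p with
  | Eq t1 t2 => tfree v t1 \/ tfree v t2
  | Rel r a => exists i, tfree v (a i)
  | Bot => False
  | Neg q => ffree v q
  | And q1 q2 => ffree v q1 \/ ffree v q2
  | Ex w q => v <> w /\ ffree v q
  end.

Fixpoint tpars (B : M -> Prop) (t : term) : Prop :=
  match t with
  | Var _ => True
  | Par m => B m
  | App f a => forall i, tpars B (a i)
  end.

Fixpoint fpars (B : M -> Prop) (p : formula) : Prop :=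
  match p with
  | Eq t1 t2 => tpars B t1 /\ tpars B t2
  | Rel r a => forall i, tpars B (a i)
  | Bot => True
  | Neg q => fpars B q
  | And q1 q2 => fpars B q1 /\ fpars B q2
  | Ex _ q => fpars B q
  end.

Definition alleq (Y : seq nat) : formula :=
  foldr (fun v acc => And (Eq (Var v) (Var v)) acc) Top Y.

End Syntax.

Fixpoint tmap (L : language) (M N : Type) (g : M -> N) (t : term L M) : term L N :=
  match t with
  | Var n => Var L N n
  | Par m => Par L (g m)
  | App f a => App (fun i => tmap g (a i))
  end.

Fixpoint fmap (L : language) (M N : Type) (g : M -> N) (p : formula L M) : formula L N :=
  match p with
  | Eq t1 t2 => Eq (tmap g t1) (tmap g t2)
  | Rel r a => Rel (fun i => tmap g (a i))
  | Bot => Bot L N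
  | Neg q => Neg (fmap g q)
  | And q1 q2 => And (fmap g q1) (fmap g q2)
  | Ex v q => Ex v (fmap g q)
  end.

Section Semantics.
Variables (L : language) (U : structure L).

Fixpoint teval (s : nat -> U) (t : term L U) : U :=
  match t with
  | Var n => s n
  | Par m => m
  | App f a => @ifun L U f (fun i => teval s (a i))
  end.

Fixpoint sat (s : nat -> U) (p : formula L U) : Prop :=
  match p with
  | Eq t1 t2 => teval s t1 = teval s t2
  | Rel r a => @irel L U r (fun i => teval s (a i))
  | Bot => False
  | Neg q => ~ sat s q
  | And q1 q2 => sat s q1 /\ sat s q2
  | Ex v q => exists m : U, sat (fun n => if n == v then m else s n) q
  end.

(* equivalence modulo T = Th(U) (with parameters: truth in U) *)
Definition fequiv (p q : formula L U) : Prop := forall s, sat s p <-> sat s q.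

(* p is (a representative of) an element of L_X(B) *)
Definition inL (X : seq nat) (B : U -> Prop) (p : formula L U) : Prop :=
  (forall v, ffree v p -> v \in X) /\ fpars B p.

Definition setT_U : U -> Prop := fun _ => True.

(* finitely additive probability measures on the Boolean algebra L_X(B):
   functions on formulas in L_X(B), invariant under equivalence mod T *)
Definition is_measure (X : seq nat) (B : U -> Prop) (m : formula L U -> R) : Prop :=
  (forall p q, inL X B p -> inL X B q -> fequiv p q -> m p = m q) /\
  (forall p, inL X B p -> (0 <= m p)%R) /\
  m (Top L U) = 1%R /\
  (forall p q, inL X B p -> inL X B q -> fequiv (And p q) (Bot L U) ->
     m (Or p q) = (m p + m q)%R).

Definition meq (X : seq nat) (B : U -> Prop) (m1 m2 : formula L U -> R) : Prop :=
  forall p, inL X B p -> m1 p = m2 p.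

(* marginal: pi_x(omega)(phi(x)) = omega(phi(x) /\ y = y),  here Y = y *)
Definition marg (m : formula L U -> R) (Y : seq nat) : formula L U -> R :=
  fun p => m (And p (alleq L U Y)).

Definition geqE (A : U -> Prop) (X : seq nat) (mu : formula L U -> R)
    (Y : seq nat) (nu : formula L U -> R) : Prop :=
  exists lam : formula L U -> R,
    is_measure (X ++ Y) A lam /\
    meq X A (marg lam Y) mu /\
    forall om : formula L U -> R,
      is_measure (X ++ Y) setT_U om ->
      meq (X ++ Y) A om lam ->
      meq X setT_U (marg om Y) mu ->
      meq Y setT_U (marg om X) nu.

Definition card_le (S T : Type) : Prop := exists f : S -> T, injective f.
Definition card_lt (S T : Type) : Prop := card_le S T /\ ~ card_le T S.

Definition small (K : Type) (B : U -> Prop) : Prop := card_lt {m : U | B m} K.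

(* |K|-saturation (for 1-types in variable 0; implies n-types) *)
Definition saturated (K : Type) : Prop :=
  forall B : U -> Prop, small K B ->
  forall P : formula L U -> Prop,
    (forall p, P p -> inL [:: 0] B p) ->
    (forall l : seq (formula L U), (forall p, List.In p l -> P p) ->
        exists s, forall p, List.In p l -> sat s p) ->
    exists m : U, forall p, P p -> sat (fun _ => m) p.

Definition automorphism (sg : U -> U) : Prop :=
  bijective sg /\
  (forall (f : fsym L) (a : 'I_(fari f) -> U), sg (@ifun L U f a) = @ifun L U f (fun i => sg (a i))) /\
  (forall (r : rsym L) (a : 'I_(rari r) -> U), @irel L U r a <-> @irel L U r (fun i => sg (a i))).

Definition elementary_on (B : U -> Prop) (g : U -> U) : Prop :=
  forall p : formula L U, fpars B p -> (forall v, ~ ffree v p) ->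
    forall s, sat s p <-> sat s (fmap g p).

Definition strongly_homogeneous (K : Type) : Prop :=
  forall (B : U -> Prop) (g : U -> U), small K B -> elementary_on B g ->
    exists sg, automorphism sg /\ forall m, B m -> sg m = g m.

(* U is a monster model of its (complete) theory T = Th(U), with monster
   cardinal |K| > |T| = |L| + aleph_0 *)
Definition monster (K : Type) : Prop :=
  inhabited U /\
  card_lt (nat + fsym L + rsym L)%type K /\
  saturated K /\ strongly_homogeneous K.

End Semantics.

(* Main.v *)
Require Import Defs.
From mathcomp Require Import all_boot.
From Stdlib Require Import Reals.
From Stdlib Require Import Lra FunctionalExtensionality ClassicalEpsilon Classical.
From mathcomp Require classical_sets.

Set Implicit Arguments.
Unset Strict Implicit.
Unset Printing Implicit Defensive.

Definition upd {T : Type} (s : nat -> T) (v : nat) (m : T) : nat -> T :=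
  fun n => if n == v then m else s n.

Lemma teval_free {L : language} {U : structure L} (t : term L U) (s s' : nat -> U) :
  (forall v, tfree v t -> s v = s' v) -> teval s t = teval s' t.
Proof.
elim: t => [n|m|f a IH] /= H; first by apply: H.
  by [].
congr (ifun _); apply: functional_extensionality => i; apply: IH => v Hv.
by apply: H; exists i.
Qed.

Lemma sat_free {L : language} {U : structure L} (p : formula L U) :
  forall (s s' : nat -> U),
  (forall v, ffree v p -> s v = s' v) -> (sat s p <-> sat s' p).
Proof.
elim: p => [t1 t2|r a| |q IH|q1 IH1 q2 IH2|v q IH] s s' H /=.
- rewrite (teval_free (s:=s) (s':=s')) ?(teval_free (t:=t2) (s:=s) (s':=s')) //.
  + by move=> v Hv; apply: H; right.
  + by move=> v Hv; apply: H; left.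
- have -> : (fun i => teval s (a i)) = (fun i => teval s' (a i)) => //.
  apply: functional_extensionality => i; apply: teval_free => v Hv.
  by apply: H; exists i.
- by [].
- by rewrite (IH s s').
- by rewrite (IH1 s s') ?(IH2 s s') // => u Hu; apply: H; [right|left].
- have E : forall m, sat (fun n => if n == v then m else s n) q <->
                     sat (fun n => if n == v then m else s' n) q.
    move=> m; apply: IH => u Hu.
    case: eqP => // /eqP Huv; apply: H; split=> //; apply/eqP; by [].
  by split=> [[m Hm]|[m Hm]]; exists m; apply/E.
Qed.

Definition ExW {L : language} {U : structure L} (W : seq nat) (p : formula L U) :=
  foldr (fun v acc => Ex v acc) p W.

Lemma sat_ExW {L : language} {U : structure L} (W : seq nat) (p : formula L U) (s : nat -> U) :
  sat s (ExW W p) <-> exists s' : nat -> U, (forall v, v \notin W -> s' v = s v) /\ sat s' p.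
Proof.
elim: W s => [|w W IH] s /=.
  split; first by move=> H; exists s.
  move=> [s' [E H]]; have -> : s = s' => //.
  by apply: functional_extensionality => v; rewrite E.
split.
  move=> [m /IH [s' [E H]]]; exists s'; split=> // v; rewrite in_cons negb_or => /andP [H1 H2].
  by rewrite E //; move/negbTE: H1 => ->.
move=> [s' [E H]]; exists (s' w); apply/IH; exists s'; split=> // v Hv.
case: eqP => [->//|/eqP Hvw]; apply: E; by rewrite in_cons negb_or Hvw.
Qed.

Lemma ffree_ExW {L : language} {U : structure L} (W : seq nat) (p : formula L U) v :
  ffree v (ExW W p) -> v \notin W /\ ffree v p.
Proof.
elim: W => [|w W IH] //= [H1 /IH [H2 H3]]; split=> //.
by rewrite in_cons negb_or H2 andbT; apply/eqP.
Qed.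

Lemma fpars_ExW {L : language} {U : structure L} (W : seq nat) (p : formula L U) B :
  fpars B (ExW W p) <-> fpars B p.
Proof. by elim: W. Qed.

Lemma tpars_mono {L : language} {U : structure L} (B B' : U -> Prop) (t : term L U) :
  (forall u, B u -> B' u) -> tpars B t -> tpars B' t.
Proof. move=> HB; elim: t => [n|m|f a IH] /=; [by []|exact: HB| move=> H i; exact: (IH i (H i))]. Qed.

Lemma fpars_mono {L : language} {U : structure L} (B B' : U -> Prop) (p : formula L U) :
  (forall u, B u -> B' u) -> fpars B p -> fpars B' p.
Proof.
move=> HB; elim: p => [t1 t2|r a| |q IH|q1 IH1 q2 IH2|v q IH] /=.
- by move=> [H1 H2]; split; apply: (tpars_mono HB).
- move=> H i; exact: (tpars_mono HB).
- by [].
- exact: IH.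
- by move=> [H1 H2]; split; [apply: IH1|apply: IH2].
- exact: IH.
Qed.

Lemma inL_mono {L : language} {U : structure L} (X X' : seq nat) (B B' : U -> Prop) (p : formula L U) :
  (forall v, v \in X -> v \in X') -> (forall u, B u -> B' u) -> inL X B p -> inL X' B' p.
Proof. move=> HX HB [H1 H2]; split; [move=> v /H1; exact: HX| exact: (fpars_mono HB)]. Qed.

Lemma inL_And {L : language} {U : structure L} X (B : U -> Prop) (p q : formula L U) :
  inL X B p -> inL X B q -> inL X B (And p q).
Proof. by move=> [H1 H2] [H3 H4]; split=> //= v [/H1|/H3]. Qed.

Lemma inL_Neg {L : language} {U : structure L} X (B : U -> Prop) (p : formula L U) :
  inL X B p -> inL X B (Neg p).
Proof. by []. Qed.

Lemma inL_Bot {L : language} {U : structure L} X (B : U -> Prop) : inL X B (Bot L U).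
Proof. by []. Qed.

Lemma inL_Top {L : language} {U : structure L} X (B : U -> Prop) : inL X B (Top L U).
Proof. by []. Qed.

Lemma inL_Or {L : language} {U : structure L} X (B : U -> Prop) (p q : formula L U) :
  inL X B p -> inL X B q -> inL X B (Or p q).
Proof. by move=> H1 H2; apply: inL_Neg; apply: inL_And; apply: inL_Neg. Qed.

Lemma alleq_free {L : language} {U : structure L} (Y : seq nat) v :
  ffree v (alleq L U Y) -> v \in Y.
Proof.
elim: Y => [|w Y IH] //= [[H|H]|H]; rewrite in_cons; apply/orP.
- by left; apply/eqP.
- by left; apply/eqP.
- by right; apply: IH.
Qed.

Lemma alleq_pars {L : language} {U : structure L} (Y : seq nat) (B : U -> Prop) :
  fpars B (alleq L U Y).
Proof. by elim: Y. Qed.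

Lemma alleq_sat {L : language} {U : structure L} (Y : seq nat) (s : nat -> U) :
  sat s (alleq L U Y).
Proof. by elim: Y => //= w Y IH. Qed.

Lemma inL_alleq {L : language} {U : structure L} X Y (B : U -> Prop) (p : formula L U) :
  inL X B p -> inL (X ++ Y) B (And p (alleq L U Y)).
Proof.
move=> [H1 H2]; split=> /=; last by split=> //; apply: alleq_pars.
by move=> v [/H1|/alleq_free]; rewrite mem_cat => -> //; rewrite orbT.
Qed.

Lemma inL_ExW {L : language} {U : structure L} X W (B : U -> Prop) (p : formula L U) :
  inL X B p -> inL [seq v <- X | v \notin W] B (ExW W p).
Proof.
move=> [H1 H2]; split; last by apply/fpars_ExW.
by move=> v /ffree_ExW [Hw /H1 Hx]; rewrite mem_filter Hw Hx.
Qed.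

Lemma meas_eq {L : language} {U : structure L} X (B : U -> Prop) m (p q : formula L U) :
  is_measure X B m -> inL X B p -> inL X B q -> fequiv p q -> m p = m q.
Proof. by move=> [H _] ; apply: H. Qed.

Lemma meas_ge0 {L : language} {U : structure L} X (B : U -> Prop) m (p : formula L U) :
  is_measure X B m -> inL X B p -> (0 <= m p)%R.
Proof. by move=> [_ [H _]]; apply: H. Qed.

Lemma meas_Top {L : language} {U : structure L} X (B : U -> Prop) m :
  is_measure X B m -> m (Top L U) = 1%R.
Proof. by move=> [_ [_ [H _]]]. Qed.

Lemma meas_add {L : language} {U : structure L} X (B : U -> Prop) m (p q : formula L U) :
  is_measure X B m -> inL X B p -> inL X B q -> (forall s, ~ (sat s p /\ sat s q)) ->
  m (Or p q) = (m p + m q)%R.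
Proof. move=> [_ [_ [_ H]]] Hp Hq D; apply: H => // s; simpl; split=> //; exact: D. Qed.

Lemma meas_Bot {L : language} {U : structure L} X (B : U -> Prop) m :
  is_measure X B m -> m (Bot L U) = 0%R.
Proof.
move=> Hm.
have H1 := meas_add Hm (inL_Top X B) (inL_Bot X B) (fun s => fun H => proj2 H).
have H2 : m (Or (Top L U) (Bot L U)) = m (Top L U).
  apply: (meas_eq Hm); [apply: inL_Or; [apply: inL_Top|apply: inL_Bot]|apply: inL_Top|].
  by move=> s /=; tauto.
lra.
Qed.

Lemma meas_unsat {L : language} {U : structure L} X (B : U -> Prop) m (p : formula L U) :
  is_measure X B m -> inL X B p -> (forall s, ~ sat s p) -> m p = 0%R.
Proof.
move=> Hm Hp H; rewrite -(meas_Bot Hm); apply: (meas_eq Hm Hp (inL_Bot X B)).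
by move=> s /=; split=> // /H.
Qed.

Lemma meas_split {L : language} {U : structure L} X (B : U -> Prop) m (p q : formula L U) :
  is_measure X B m -> inL X B p -> inL X B q ->
  m p = (m (And p q) + m (And p (Neg q)))%R.
Proof.
move=> Hm Hp Hq.
rewrite -(meas_add Hm); try (by apply: inL_And); last first.
  by move=> s /= [[_ H1] [_ H2]].
apply: (meas_eq Hm) => //; first by apply: inL_Or; apply: inL_And.
move=> s /=; case: (classic (sat s q)); tauto.
Qed.

Local Open Scope R_scope.

Ltac solve_inL := by repeat first [assumption | apply: inL_And | apply: inL_Neg | apply: inL_Top | apply: inL_Bot].

Definition ind {L : language} {U : structure L} (p : formula L U) (s : nat -> U) : R :=
  if excluded_middle_informative (sat s p) then 1 else 0.

Definition code (L : language) (U : structure L) := seq (R * formula L U).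

Definition ev {L : language} {U : structure L} (l : code U) (s : nat -> U) : R :=
  foldr (fun e acc => e.1 * ind e.2 s + acc) 0 l.

Definition val {L : language} {U : structure L} (m : formula L U -> R) (l : code U) : R :=
  foldr (fun e acc => e.1 * m e.2 + acc) 0 l.

Definition valt {L : language} {U : structure L} (m : formula L U -> R) (l : code U)
  (th : formula L U) : R :=
  foldr (fun e acc => e.1 * m (And e.2 th) + acc) 0 l.

Definition inLc {L : language} {U : structure L} X (B : U -> Prop) (l : code U) :=
  forall e, List.In e l -> inL X B e.2.

Lemma ind_T {L : language} {U : structure L} (p : formula L U) s : sat s p -> ind p s = 1.
Proof. by rewrite /ind; case: excluded_middle_informative. Qed.

Lemma ind_F {L : language} {U : structure L} (p : formula L U) s : ~ sat s p -> ind p s = 0.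
Proof. by rewrite /ind; case: excluded_middle_informative. Qed.

Lemma inLc_cons {L : language} {U : structure L} X (B : U -> Prop) e (l : code U) :
  inLc X B (e :: l) -> inL X B e.2 /\ inLc X B l.
Proof. by move=> H; split; [apply: H; left| move=> e' He'; apply: H; right]. Qed.

Lemma valt_split {L : language} {U : structure L} X (B : U -> Prop) m (l : code U) th q :
  is_measure X B m -> inLc X B l -> inL X B th -> inL X B q ->
  valt m l th = valt m l (And th q) + valt m l (And th (Neg q)).
Proof.
move=> Hm; elim: l => [|e l IH] /=; first by move=> *; lra.
move=> /inLc_cons [He Hl] Ht Hq; rewrite IH //.
rewrite (meas_split Hm (p := And e.2 th) (q := q)); try solve_inL.
rewrite (meas_eq Hm (p := And (And e.2 th) q) (q := And e.2 (And th q))); try solve_inL;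
  last by move=> s /=; tauto.
rewrite (meas_eq Hm (p := And (And e.2 th) (Neg q)) (q := And e.2 (And th (Neg q)))); try solve_inL;
  last by move=> s /=; tauto.
lra.
Qed.

Lemma mono {L : language} {U : structure L} X (B : U -> Prop) m :
  is_measure X B m ->
  forall (l : code U) th c0, inLc X B l -> inL X B th ->
  (forall s, sat s th -> 0 <= c0 + ev l s) -> 0 <= c0 * m th + valt m l th.
Proof.
move=> Hm; elim=> [|[c1 p1] l IH] th c0 Hl Ht H /=.
  case: (classic (exists s, sat s th)) => [[s Hs]|Hn].
    have := H s Hs; rewrite /= => H1; have := meas_ge0 Hm Ht; nra.
  rewrite (meas_unsat Hm Ht); first lra.
  by move=> s Hs; apply: Hn; exists s.
move/inLc_cons: Hl => /= [Hp1 Hl].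
have Ht1 : inL X B (And th p1) by apply: inL_And.
have Ht2 : inL X B (And th (Neg p1)) by apply: inL_And.
have I1 := IH (And th p1) (c0 + c1) Hl Ht1.
have I2 := IH (And th (Neg p1)) c0 Hl Ht2.
have {I1} I1 : 0 <= (c0 + c1) * m (And th p1) + valt m l (And th p1).
  apply: I1 => s /= [Hs Hs1]; have := H s Hs; rewrite /= ind_T //; lra.
have {I2} I2 : 0 <= c0 * m (And th (Neg p1)) + valt m l (And th (Neg p1)).
  apply: I2 => s /= [Hs Hs1]; have := H s Hs; rewrite /= ind_F //; lra.
rewrite (valt_split Hm (q := p1)) //.
rewrite (meas_split Hm (p := th) (q := p1)) //.
rewrite (meas_eq Hm (p := And p1 th) (q := And th p1)); try solve_inL;
  last by move=> s /=; tauto.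
lra.
Qed.

Lemma valt_Top {L : language} {U : structure L} X (B : U -> Prop) m (l : code U) :
  is_measure X B m -> inLc X B l -> valt m l (Top L U) = val m l.
Proof.
move=> Hm; elim: l => [|e l IH] //= /inLc_cons [He Hl]; rewrite IH //.
rewrite (meas_eq Hm (p := And e.2 (Top L U)) (q := e.2)) //; first by apply: inL_And => //; apply: inL_Top.
by move=> s /=; tauto.
Qed.

Lemma mono_top {L : language} {U : structure L} X (B : U -> Prop) m (l : code U) c0 :
  is_measure X B m -> inLc X B l ->
  (forall s, 0 <= c0 + ev l s) -> 0 <= c0 + val m l.
Proof.
move=> Hm Hl H; have := mono Hm (th := Top L U) (c0 := c0) Hl (inL_Top X B).
rewrite (valt_Top Hm) // (meas_Top Hm) Rmult_1_r; apply=> s _; exact: H.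
Qed.

Definition scale {L : language} {U : structure L} (a : R) (l : code U) : code U :=
  map (fun e => (a * e.1, e.2)) l.

Definition sumind {L : language} {U : structure L} (l : code U) (s : nat -> U) : R :=
  foldr (fun e acc => ind e.2 s + acc) 0 l.

Lemma ind_01 {L : language} {U : structure L} (p : formula L U) s : ind p s = 0 \/ ind p s = 1.
Proof. by rewrite /ind; case: excluded_middle_informative; [right|left]. Qed.

Lemma ind_And {L : language} {U : structure L} (p q : formula L U) s :
  ind (And p q) s = ind p s * ind q s.
Proof.
case: (classic (sat s p)) => Hp; case: (classic (sat s q)) => Hq.
- by rewrite !ind_T //=; lra.
- rewrite ind_F ?(ind_F Hq) /=; [lra|tauto].
- rewrite ind_F ?(ind_F Hp) /=; [lra|tauto].
- rewrite ind_F ?(ind_F Hp) /=; [lra|tauto].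
Qed.

Lemma ind_Neg {L : language} {U : structure L} (p : formula L U) s :
  ind (Neg p) s = 1 - ind p s.
Proof.
case: (classic (sat s p)) => Hp.
- rewrite (ind_F (p := Neg p)); last by move=> /= H; apply: H.
  rewrite ind_T //; lra.
- rewrite (ind_T (p := Neg p)) // ind_F //; lra.
Qed.

Lemma ev_cat {L : language} {U : structure L} (a b : code U) s : ev (a ++ b) s = ev a s + ev b s.
Proof. elim: a => [|e a IH] /=; [lra| rewrite IH; lra]. Qed.

Lemma val_cat {L : language} {U : structure L} m (a b : code U) : val m (a ++ b) = val m a + val m b.
Proof. elim: a => [|e a IH] /=; [lra| rewrite IH; lra]. Qed.

Lemma valt_cat {L : language} {U : structure L} m (a b : code U) th :
  valt m (a ++ b) th = valt m a th + valt m b th.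
Proof. elim: a => [|e a IH] /=; [lra| rewrite IH; lra]. Qed.

Lemma sumind_cat {L : language} {U : structure L} (a b : code U) s :
  sumind (a ++ b) s = sumind a s + sumind b s.
Proof. elim: a => [|e a IH] /=; [lra| rewrite IH; lra]. Qed.

Lemma ev_scale {L : language} {U : structure L} c (a : code U) s : ev (scale c a) s = c * ev a s.
Proof. elim: a => [|e a IH] /=; [lra| rewrite IH; lra]. Qed.

Lemma val_scale {L : language} {U : structure L} m c (a : code U) : val m (scale c a) = c * val m a.
Proof. elim: a => [|e a IH] /=; [lra| rewrite IH; lra]. Qed.

Lemma valt_scale {L : language} {U : structure L} m c (a : code U) th :
  valt m (scale c a) th = c * valt m a th.
Proof. elim: a => [|e a IH] /=; [lra| rewrite IH; lra]. Qed.

Lemma inLc_cat {L : language} {U : structure L} X (B : U -> Prop) (a b : code U) :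
  inLc X B a -> inLc X B b -> inLc X B (a ++ b).
Proof. move=> Ha Hb e He; case: (List.in_app_or _ _ _ He); [exact: Ha|exact: Hb]. Qed.

Lemma inLc_scale {L : language} {U : structure L} X (B : U -> Prop) c (a : code U) :
  inLc X B a -> inLc X B (scale c a).
Proof. move=> Ha e He; case: (proj1 (List.in_map_iff _ _ _) He) => e' [<- He'] /=; exact: (Ha _ He'). Qed.

Lemma ev_mapAnd {L : language} {U : structure L} (f : R -> R) (q : formula L U) (a : code U) s :
  ev (map (fun e => (f e.1, And q e.2)) a) s = ind q s * ev (map (fun e => (f e.1, e.2)) a) s.
Proof. elim: a => [|e a IH] /=; [lra| rewrite IH ind_And; lra]. Qed.

Lemma sumind_mapAnd {L : language} {U : structure L} (f : R -> R) (q : formula L U) (a : code U) s :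
  sumind (map (fun e => (f e.1, And q e.2)) a) s = ind q s * sumind a s.
Proof. elim: a => [|e a IH] /=; [lra| rewrite IH ind_And; lra]. Qed.

Lemma ev_shift {L : language} {U : structure L} c (a : code U) s :
  ev (map (fun e => (e.1 + c, e.2)) a) s = ev a s + c * sumind a s.
Proof. elim: a => [|e a IH] /=; [lra| rewrite IH; lra]. Qed.

Lemma map_pair_id {L : language} {U : structure L} (a : code U) :
  map (fun e => (e.1, e.2)) a = a.
Proof. by elim: a => //= [[x y] a ->]. Qed.

Fixpoint atoms {L : language} {U : structure L} (l : code U) : code U :=
  match l with
  | [::] => [:: (0, Top L U)]
  | (c, p) :: l' => map (fun e => (e.1 + c, And p e.2)) (atoms l') ++
                    map (fun e => (e.1, And (Neg p) e.2)) (atoms l')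
  end.

Lemma atoms_inLc {L : language} {U : structure L} X (B : U -> Prop) (l : code U) :
  inLc X B l -> inLc X B (atoms l).
Proof.
elim: l => [|[c p] l IH] /=.
  by move=> _ e [<-|//]; apply: inL_Top.
move=> /inLc_cons /= [Hp /IH Hl] e He; case: (List.in_app_or _ _ _ He) => {}He;
  case: (proj1 (List.in_map_iff _ _ _) He) => e' [<- He'] /=; have := Hl _ He'; solve_inL.
Qed.

Lemma atoms_sum {L : language} {U : structure L} (l : code U) s : sumind (atoms l) s = 1.
Proof.
elim: l => [|[c p] l IH] /=; first by rewrite ind_T //=; lra.
by rewrite sumind_cat (sumind_mapAnd (fun x => x + c)) (sumind_mapAnd (fun x => x)) IH ind_Neg; lra.
Qed.

Lemma atoms_ev {L : language} {U : structure L} (l : code U) s : ev (atoms l) s = ev l s.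
Proof.
elim: l => [|[c p] l IH] /=; first by lra.
rewrite ev_cat (ev_mapAnd (fun x => x + c)) (ev_mapAnd (fun x => x)) ev_shift map_pair_id.
by rewrite IH atoms_sum ind_Neg; lra.
Qed.

Lemma atoms_val {L : language} {U : structure L} (l : code U) s e :
  List.In e (atoms l) -> sat s e.2 -> e.1 = ev l s.
Proof.
elim: l e => [|[c p] l IH] e /=.
  by move=> [<-|//] _ /=.
move=> He; case: (List.in_app_or _ _ _ He) => {}He;
  case: (proj1 (List.in_map_iff _ _ _) He) => e' [<- He'] /= [H1 H2].
- by rewrite (IH _ He' H2) ind_T //; lra.
- by rewrite (IH _ He' H2) ind_F //; lra.
Qed.

Lemma ev_free {L : language} {U : structure L} X (B : U -> Prop) (l : code U) (s s' : nat -> U) :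
  inLc X B l -> (forall v, v \in X -> s v = s' v) -> ev l s = ev l s'.
Proof.
move=> Hl E; elim: l Hl => [|e l IH] //= /inLc_cons [[He _] Hl].
rewrite IH //; congr (_ * _ + _); rewrite /ind.
have := sat_free (p := e.2) (s := s) (s' := s') (fun v Hv => E v (He v Hv)).
by move=> Hiff; case: excluded_middle_informative => H1; case: excluded_middle_informative => H2 //; exfalso; tauto.
Qed.

Lemma ev_le_max {L : language} {U : structure L} (a : code U) M s :
  (forall e, List.In e a -> e.1 <= M) -> ev a s <= M * sumind a s.
Proof.
elim: a => [|e a IH] /= H; first lra.
have := IH (fun e' He' => H e' (or_intror He')); have := H e (or_introl erefl).
by case: (ind_01 e.2 s) => ->; nra.
Qed.

Lemma valt_unsat {L : language} {U : structure L} X (B : U -> Prop) m (l : code U) th :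
  is_measure X B m -> inLc X B l -> inL X B th -> (forall s, ~ sat s th) -> valt m l th = 0.
Proof.
move=> Hm; elim: l => [|e l IH] //= /inLc_cons [He Hl] Ht Hn.
rewrite IH // (meas_unsat Hm (p := And e.2 th)); [lra|solve_inL|].
by move=> s /= [_ /Hn].
Qed.

Lemma exists_max {L : language} {U : structure L} (a : code U) :
  a <> [::] -> exists a1 e a2, a = a1 ++ e :: a2 /\ forall e', List.In e' a -> e'.1 <= e.1.
Proof.
elim: a => [//|e a IH] _.
case: a IH => [|e0 a] IH.
  by exists [::], e, [::]; split=> // e' [<-|//]; lra.
have [a1 [e1 [a2 [Ea Hmax]]]] := IH ltac:(done).
case: (Rle_lt_dec e1.1 e.1) => Hle.
  exists [::], e, (e0 :: a); split=> // e' [<-|He']; first lra.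
  have := Hmax e' He'; lra.
exists (e :: a1), e1, a2; rewrite Ea; split=> // e' [<-|He']; first lra.
apply: Hmax; by rewrite Ea.
Qed.

Lemma chi_inL {L : language} {U : structure L} (V1 V2 : seq nat) (P : U -> Prop) (p : formula L U) :
  inL V1 P p ->
  inL V1 P (ExW [seq v <- V1 | v \notin V2] p) /\ inL V2 P (ExW [seq v <- V1 | v \notin V2] p).
Proof.
move=> Hp; have H := @inL_ExW L U V1 [seq v <- V1 | v \notin V2] P p Hp; split; apply: (inL_mono _ _ H) => // v;
  rewrite !mem_filter.
- by case/andP.
- by case/andP => H1 H2; move: H1; rewrite H2 andbT; case: (v \in V2).
Qed.

Lemma rec_bound {L : language} {U : structure L} (V1 V2 : seq nat) (P1 P2 : U -> Prop)
    (m1 m2 : formula L U -> R) :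
  (forall u, P1 u -> P2 u) -> is_measure V1 P1 m1 -> is_measure V2 P2 m2 ->
  (forall p, inL V1 P1 p -> inL V2 P2 p -> m1 p = m2 p) ->
  forall n (a : code U), leq (size a) n -> forall th c0 (l2 : code U),
  inLc V1 P1 a -> inL V1 P1 th -> inL V2 P1 th -> inLc V2 P2 l2 ->
  (forall s, sat s th -> forall e, List.In e a -> sat s e.2 -> e.1 + ev l2 s <= c0) ->
  (forall s, sat s th -> sumind a s = 1) ->
  valt m1 a th + valt m2 l2 th <= c0 * m2 th.
Proof.
move=> HP Hm1 Hm2 Agr.
have inL12 : forall p, inL V2 P1 p -> inL V2 P2 p by move=> p; apply: inL_mono.
set W := [seq v <- V1 | v \notin V2].
elim=> [|n IH] a Ha th c0 l2 Hal Ht1 Ht2 Hl2 Hb Hs.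
  case: a Ha Hal Hb Hs => [|? ?] //= _ _ _ Hs.
  have Hn : forall s, ~ sat s th by move=> s /Hs /=; lra.
  rewrite (valt_unsat Hm2 Hl2 (inL12 _ Ht2) Hn) (meas_unsat Hm2 (inL12 _ Ht2) Hn) /=; lra.
case: (classic (a = [::])) => [Ea|/exists_max [a1 [e [a2 [Ea Hmax]]]]].
  rewrite Ea in Hs; have Hn : forall s, ~ sat s th by move=> s /Hs /=; lra.
  rewrite Ea (valt_unsat Hm2 Hl2 (inL12 _ Ht2) Hn) (meas_unsat Hm2 (inL12 _ Ht2) Hn) /=; lra.
have He : inL V1 P1 e.2 by apply: Hal; rewrite Ea; apply: List.in_or_app; right; left.
have [Hc1 Hc2] := chi_inL V2 He; rewrite -/W in Hc1 Hc2.
set chi := ExW W e.2 in Hc1 Hc2.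
have T1a : inL V1 P1 (And th chi) by solve_inL.
have T1b : inL V2 P1 (And th chi) by solve_inL.
have T2a : inL V1 P1 (And th (Neg chi)) by solve_inL.
have T2b : inL V2 P1 (And th (Neg chi)) by solve_inL.
have A1 : 0 <= e.1 * m1 (And th chi) + valt m1 (scale (-1) a) (And th chi).
  apply: (mono Hm1) => //; first exact: inLc_scale.
  move=> s /= [Hst _]; rewrite ev_scale.
  have := ev_le_max s Hmax; rewrite Hs //; lra.
rewrite valt_scale in A1.
have A2 : 0 <= (c0 - e.1) * m2 (And th chi) + valt m2 (scale (-1) l2) (And th chi).
  apply: (mono Hm2) => //; [exact: inLc_scale|exact: inL12|].
  move=> s /= [Hst /sat_ExW [s' [Es' Hs']]].
  have Hvw : forall v, v \in V2 -> s' v = s v.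
    by move=> v Hv; apply: Es'; rewrite mem_filter Hv.
  have Hst' : sat s' th.
    by apply/(sat_free (s := s') (s' := s)) => // v /(proj1 Ht2 v); apply: Hvw.
  have := Hb s' Hst' e ltac:(rewrite Ea; apply: List.in_or_app; right; left; reflexivity) Hs'.
  rewrite ev_scale (ev_free (s := s') (s' := s) Hl2 Hvw); lra.
rewrite valt_scale in A2.
have A3 : m1 (And th chi) = m2 (And th chi) by apply: Agr => //; exact: inL12.
have A4 : valt m1 (a1 ++ a2) (And th (Neg chi)) + valt m2 l2 (And th (Neg chi))
          <= c0 * m2 (And th (Neg chi)).
  have Hsub : forall e', List.In e' (a1 ++ a2) -> List.In e' a.
    move=> e' H0; case: (List.in_app_or _ _ _ H0) => H; rewrite Ea; apply: List.in_or_app; [by left| by right; right].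
  apply: IH => //.
  - move: Ha; rewrite Ea !size_cat /=; by rewrite addnS.
  - by move=> e' /Hsub; apply: Hal.
  - move=> s /= [Hst _] e' /Hsub; exact: Hb.
  - move=> s /= [Hst Hnc]; have := Hs s Hst; rewrite Ea !sumind_cat /=.
    rewrite (ind_F (p := e.2)); first lra.
    by move=> H; apply: Hnc; apply/sat_ExW; exists s.
have A5 : valt m1 a (And th (Neg chi)) = valt m1 (a1 ++ a2) (And th (Neg chi)).
  rewrite Ea !valt_cat /= (meas_unsat Hm1 (p := And e.2 (And th (Neg chi)))); first lra.
    solve_inL.
  by move=> s /= [H1 [_ H2]]; apply: H2; apply/sat_ExW; exists s.
rewrite (valt_split Hm1 (q := chi)) // (valt_split Hm2 (l := l2) (q := chi)) //; try exact: inL12.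
rewrite (meas_split Hm2 (p := th) (q := chi)) //; try exact: inL12.
rewrite A5; rewrite A3 in A1; nra.
Qed.

Lemma mixed {L : language} {U : structure L} (V1 V2 : seq nat) (P1 P2 : U -> Prop)
    (m1 m2 : formula L U -> R) :
  (forall u, P1 u -> P2 u) -> is_measure V1 P1 m1 -> is_measure V2 P2 m2 ->
  (forall p, inL V1 P1 p -> inL V2 P2 p -> m1 p = m2 p) ->
  forall (l1 l2 : code U) c, inLc V1 P1 l1 -> inLc V2 P2 l2 ->
  (forall s, ev l1 s + ev l2 s <= c) -> val m1 l1 + val m2 l2 <= c.
Proof.
move=> HP Hm1 Hm2 Agr l1 l2 c Hl1 Hl2 H.
have Ha := atoms_inLc Hl1.
have := rec_bound HP Hm1 Hm2 Agr (leqnn (size (atoms l1))) (th := Top L U) (c0 := c) Ha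
  (inL_Top _ _) (inL_Top _ _) Hl2.
rewrite (valt_Top Hm1) // (valt_Top Hm2) // (meas_Top Hm2) Rmult_1_r => H1.
have E : val m1 l1 = val m1 (atoms l1).
  have B1 := mono_top (c0 := 0) Hm1 (inLc_cat Hl1 (inLc_scale (c := -1) Ha)).
  have B2 := mono_top (c0 := 0) Hm1 (inLc_cat Ha (inLc_scale (c := -1) Hl1)).
  rewrite !val_cat !val_scale in B1 B2.
  have : 0 <= 0 + (val m1 l1 + -1 * val m1 (atoms l1)).
    by apply: B1 => s; rewrite ev_cat ev_scale atoms_ev; lra.
  have : 0 <= 0 + (val m1 (atoms l1) + -1 * val m1 l1).
    by apply: B2 => s; rewrite ev_cat ev_scale atoms_ev; lra.
  lra.
rewrite E; apply: H1; last by move=> s _; apply: atoms_sum.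
move=> s _ e He Hse; rewrite (atoms_val He Hse); exact: H.
Qed.

Definition bdd {T : Type} (g : T -> R) := exists M, forall x, Rabs (g x) <= M.

Definition valid {T : Type} (H : (T -> R) * R -> Prop) :=
  (forall g r h t, H (g, r) -> H (h, t) -> H (fun x => g x + h x, r + t)) /\
  (forall g r a, H (g, r) -> H (fun x => a * g x, a * r)) /\
  (forall g r, H (g, r) -> bdd g) /\
  (forall g r c, H (g, r) -> (forall x, g x <= c) -> r <= c).

Lemma valid_fun {T : Type} (H : (T -> R) * R -> Prop) g r r' :
  valid H -> H (g, r) -> H (g, r') -> r = r'.
Proof.
move=> [V2 [V3 [_ V5]]] H1 H2.
have A := V5 _ _ 0 (V2 _ _ _ _ H1 (V3 _ _ (-1) H2)) ltac:(move=> x /=; lra).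
have B := V5 _ _ 0 (V2 _ _ _ _ H2 (V3 _ _ (-1) H1)) ltac:(move=> x /=; lra).
lra.
Qed.

Lemma valid_ext {T : Type} (H1 H2 : (T -> R) * R -> Prop) :
  (forall e, H1 e <-> H2 e) -> valid H1 -> valid H2.
Proof.
move=> E [V2 [V3 [V4 V5]]]; split; [|split; [|split]].
- by move=> g r h t /E A /E B; apply/E; apply: V2.
- by move=> g r a /E A; apply/E; apply: V3.
- by move=> g r /E A; apply: V4 A.
- by move=> g r c /E A; apply: V5 A.
Qed.

Lemma valid_pairs {T : Type} (H : (T -> R) * R -> Prop) :
  (forall e1 e2, H e1 -> H e2 -> exists H', valid H' /\ (forall e, H' e -> H e) /\ H' e1 /\ H' e2) ->
  valid H.
Proof.
move=> P; split; [|split; [|split]].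
- move=> g r h t A B; have [H' [[V2 _] [S [A' B']]]] := P _ _ A B; apply: S; exact: V2 A' B'.
- move=> g r a A; have [H' [[_ [V3 _]] [S [A' _]]]] := P _ _ A A; apply: S; exact: V3 A'.
- move=> g r A; have [H' [[_ [_ [V4 _]]] [S [A' _]]]] := P _ _ A A; exact: V4 A'.
- move=> g r c A; have [H' [[_ [_ [_ V5]]] [S [A' _]]]] := P _ _ A A; exact: V5 A'.
Qed.

Lemma bdd_lin {T : Type} (g h : T -> R) a : bdd g -> bdd h -> bdd (fun x => g x + a * h x).
Proof.
move=> [M HM] [N HN]; exists (M + Rabs a * N) => x.
apply: Rle_trans (Rabs_triang _ _) _; rewrite Rabs_mult.
have := HM x; have := HN x; have := Rabs_pos a; nra.
Qed.

Lemma extend_one {T : Type} (H : (T -> R) * R -> Prop) (h : T -> R) :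
  valid H -> (exists e, H e) -> bdd h ->
  exists t, valid (fun e => exists g r a, H (g, r) /\ e.1 = (fun x => g x + a * h x) /\ e.2 = r + a * t).
Proof.
move=> VH [[g0 r0] H0] Hh.
have VH' := VH; move: VH' => [V2 [V3 [V4 V5]]].
have Hz := V3 _ _ 0 H0.
set z := fun x => 0 * g0 x in Hz.
have [N HN] := Hh.
pose S u := exists g r c, H (g, r) /\ (forall x, g x - h x <= c) /\ u = r - c.
have Sup : forall u g' r' c', S u -> H (g', r') -> (forall x, g' x + h x <= c') -> u <= c' - r'.
  move=> u g' r' c' [g [r [c [Hg [Hc ->]]]]] Hg' Hc'.
  have := V5 _ _ (c + c') (V2 _ _ _ _ Hg Hg') ltac:(move=> x /=; have := Hc x; have := Hc' x; lra).
  lra.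
have [t [Ht1 Ht2]] : {t | is_lub S t}.
  apply: completeness.
    exists (N - 0 * r0) => u Su; apply: Sup Su Hz _ => x; rewrite /z.
    have := HN x; have := Rle_abs (h x); lra.
  exists (0 * r0 - N); exists z, (0 * r0), N; split=> //; split=> // x; rewrite /z.
  have := HN x; have := Rabs_Ropp (h x); have := Rle_abs (- h x); lra.
have tS : forall u, S u -> u <= t by move=> u Su; apply: Ht1.
have tU : forall g' r' c', H (g', r') -> (forall x, g' x + h x <= c') -> t <= c' - r'.
  move=> g' r' c' Hg' Hc'; apply: Ht2 => u Su; exact: Sup Su Hg' Hc'.
exists t; split; [|split; [|split]].
- move=> g r g' r' [g1 [r1 [a1 [H1 [/= -> ->]]]]] [g2 [r2 [a2 [H2 [/= -> ->]]]]].
  exists (fun x => g1 x + g2 x), (r1 + r2), (a1 + a2); split; first exact: V2.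
  split=> /=; last lra.
  by apply: functional_extensionality => x; lra.
- move=> g r b [g1 [r1 [a1 [H1 [/= -> ->]]]]].
  exists (fun x => b * g1 x), (b * r1), (b * a1); split; first exact: V3.
  split=> /=; last lra.
  by apply: functional_extensionality => x; lra.
- move=> g r [g1 [r1 [a1 [H1 [/= -> _]]]]]; apply: bdd_lin => //; exact: V4 H1.
- move=> g r c [g1 [r1 [a1 [H1 [/= -> ->]]]]] Hc.
  case: (Rtotal_order a1 0) => [Hneg|[Hz0|Hpos]].
  +
    set b := - a1.
    have Hb : 0 < b by rewrite /b; lra.
    have Hib : 0 < / b by apply: Rinv_0_lt_compat.
    have Hbb : / b * b = 1 by apply: Rinv_l; lra.
    have Hs : S (/ b * r1 - / b * c).
      exists (fun x => / b * g1 x), (/ b * r1), (/ b * c); split; first exact: V3.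
      split=> // x.
      have E : / b * g1 x - h x = / b * (g1 x + a1 * h x).
        rewrite Rmult_plus_distr_l -Rmult_assoc /b; rewrite /b in Hbb.
        have -> : / - a1 * a1 = - (/ - a1 * - a1) by ring.
        rewrite Hbb; ring.
      rewrite E; apply: Rmult_le_compat_l; [lra| exact: Hc].
    have := tS _ Hs.
    have E2 : r1 + a1 * t - c = b * (/ b * r1 - / b * c - t).
      have -> : b * (/ b * r1 - / b * c - t) = (/ b * b) * r1 - (/ b * b) * c - b * t by ring.
      rewrite Hbb /b; ring.
    have : b * (/ b * r1 - / b * c - t) <= 0.
      have := tS _ Hs; nra.
    lra.
  + have -> : a1 = 0 by [].
    have := V5 _ _ c H1 ltac:(move=> x; have := Hc x; rewrite Hz0; lra); lra.
  + have Hib : 0 < / a1 by apply: Rinv_0_lt_compat.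
    have Haa : / a1 * a1 = 1 by apply: Rinv_l; lra.
    have := tU _ _ (/ a1 * c) (V3 _ _ (/ a1) H1).
    have Hc' : forall x, / a1 * g1 x + h x <= / a1 * c.
      move=> x; have E : / a1 * g1 x + h x = / a1 * (g1 x + a1 * h x).
        rewrite Rmult_plus_distr_l -Rmult_assoc Haa; ring.
      rewrite E; apply: Rmult_le_compat_l; [lra| exact: Hc].
    move=> /(_ Hc') Ht.
    have E2 : c - (r1 + a1 * t) = a1 * (/ a1 * c - / a1 * r1 - t).
      have -> : a1 * (/ a1 * c - / a1 * r1 - t) = (/ a1 * a1) * c - (/ a1 * a1) * r1 - a1 * t by ring.
      rewrite Haa; ring.
    have : 0 <= a1 * (/ a1 * c - / a1 * r1 - t) by nra.
    lra.
Qed.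

Lemma HB_max {T : Type} (G0 : (T -> R) * R -> Prop) :
  valid G0 -> (exists e, G0 e) ->
  exists H, valid H /\ (forall e, G0 e -> H e) /\ (forall h, bdd h -> exists r, H (h, r)).
Proof.
move=> VG0 [e0 He0].
pose P (X : classical_sets.set ((T -> R) * R)) := valid (fun e => X e \/ G0 e).
have [A [PA Amax]] : exists A, P A /\ (forall B, classical_sets.proper A B -> ~ P B).
  apply: classical_sets.Zorn_bigcup => F FP Ftot.
  rewrite /P; apply: valid_pairs => e1 e2 H1 H2.
  have sub : forall X, F X -> forall e, X e \/ G0 e ->
      classical_sets.bigcup F (fun X => X) e \/ G0 e.
    move=> X FX e [Xe|Ge]; [left; by exists X| by right].
  case: H1 => [[X1 F1 X1e]|G1]; case: H2 => [[X2 F2 X2e]|G2].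
  - case: (Ftot X1 X2 F1 F2) => S12.
    + exists (fun e => X2 e \/ G0 e); split; first exact: FP.
      split; first exact: sub.
      by split; left=> //; apply: S12.
    + exists (fun e => X1 e \/ G0 e); split; first exact: FP.
      split; first exact: sub.
      by split; left=> //; apply: S12.
  - exists (fun e => X1 e \/ G0 e); split; first exact: FP.
    by split; [exact: sub| split; [left|right]].
  - exists (fun e => X2 e \/ G0 e); split; first exact: FP.
    by split; [exact: sub| split; [right|left]].
  - exists G0; split=> //; split=> //; by move=> e Ge; right.
set H := fun e => A e \/ G0 e.
exists H; split=> //; split; first by move=> e Ge; right.
move=> h Hh; apply: NNPP => Hnot.
have [t Vt] := extend_one (h := h) PA (ex_intro _ e0 (or_intror He0)) Hh.
set H' := fun e : (T -> R) * R => exists g r a, H (g, r) /\ e.1 = (fun x => g x + a * h x) /\ e.2 = r + a * t.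
have HH' : forall e, H e -> H' e.
  move=> [g r] He; exists g, r, 0; split=> //; split=> /=; last lra.
  by apply: functional_extensionality => x; lra.
apply: (Amax H').
  split; first by move=> e Ae; apply: HH'; left.
  move=> S; have [[g1 r1] Hg1] : exists e, H e by exists e0; right.
  have [V2 [V3 _]] := PA.
  have Hz := V3 _ _ 0 Hg1.
  have : H' (h, 0 * r1 + 1 * t).
    exists (fun x => 0 * g1 x), (0 * r1), 1; split=> //; split=> //=.
    by apply: functional_extensionality => x; lra.
  move=> /S Ah; apply: Hnot; exists (0 * r1 + 1 * t); by left.
apply: (valid_ext (H1 := H')) => // e; split; first by left.
by case=> // Ge; apply: HH'; right.
Qed.

Lemma bdd_ev {L : language} {U : structure L} (l : code U) : bdd (ev l).
Proof.
elim: l => [|e l [M HM]]; first by exists 0 => x /=; rewrite Rabs_R0; lra.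
exists (Rabs e.1 + M) => x /=.
apply: Rle_trans (Rabs_triang _ _) _; rewrite Rabs_mult.
have := HM x; have := Rabs_pos e.1.
by case: (ind_01 e.2 x) => ->; rewrite ?Rabs_R0 ?Rabs_R1; nra.
Qed.

Lemma bdd_add {T : Type} (g h : T -> R) : bdd g -> bdd h -> bdd (fun x => g x + h x).
Proof.
move=> [M HM] [N HN]; exists (M + N) => x.
apply: Rle_trans (Rabs_triang _ _) _; have := HM x; have := HN x; lra.
Qed.

Lemma bdd_ind {L : language} {U : structure L} (p : formula L U) : bdd (ind p).
Proof. exists 1 => x; case: (ind_01 p x) => ->; rewrite ?Rabs_R0 ?Rabs_R1; lra. Qed.

Lemma ind_equiv {L : language} {U : structure L} (p q : formula L U) :
  fequiv p q -> ind p = ind q.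
Proof.
move=> E; apply: functional_extensionality => s; rewrite /ind.
case: excluded_middle_informative => H1; case: excluded_middle_informative => H2 //;
  exfalso; have := E s; tauto.
Qed.

Definition is_global {L : language} {U : structure L} (om : formula L U -> R) :=
  forall V (P : U -> Prop), is_measure V P om.

Lemma amalgam {L : language} {U : structure L} (V1 V2 : seq nat) (P1 P2 : U -> Prop)
    (m1 m2 : formula L U -> R) :
  (forall u, P1 u -> P2 u) -> is_measure V1 P1 m1 -> is_measure V2 P2 m2 ->
  (forall p, inL V1 P1 p -> inL V2 P2 p -> m1 p = m2 p) ->
  exists om, is_global om /\ meq V1 P1 om m1 /\ meq V2 P2 om m2.
Proof.
move=> HP Hm1 Hm2 Agr.
pose G0 (e : (nat -> U) -> R) (r : R) := exists (l1 l2 : code U), inLc V1 P1 l1 /\ inLc V2 P2 l2 /\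
  e = (fun s => ev l1 s + ev l2 s) /\ r = val m1 l1 + val m2 l2.
have VG0 : valid (fun e => G0 e.1 e.2).
  split; [|split; [|split]].
  - move=> g r h t /= [l1 [l2 [H1 [H2 [-> ->]]]]] /= [l1' [l2' [H1' [H2' [-> ->]]]]].
    exists (l1 ++ l1'), (l2 ++ l2'); split; first exact: inLc_cat.
    split; first exact: inLc_cat.
    split; last by rewrite !val_cat; lra.
    by apply: functional_extensionality => s; rewrite !ev_cat; lra.
  - move=> g r a /= [l1 [l2 [H1 [H2 [-> ->]]]]].
    exists (scale a l1), (scale a l2); split; first exact: inLc_scale.
    split; first exact: inLc_scale.
    split; last by rewrite !val_scale; lra.
    by apply: functional_extensionality => s; rewrite !ev_scale; lra.
  - move=> g r /= [l1 [l2 [H1 [H2 [-> _]]]]]; apply: bdd_add; exact: bdd_ev.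
  - move=> g r c /= [l1 [l2 [H1 [H2 [-> ->]]]]] Hc; exact: (mixed HP Hm1 Hm2 Agr H1 H2 Hc).
have [H [VH [G0H Hdom]]] := HB_max VG0 (ex_intro _ (fun s => ev [::] s + ev [::] s, 0 + 0)
  (ex_intro _ [::] (ex_intro _ [::] (conj (fun e (F : List.In e [::]) => match F with end)
    (conj (fun e (F : List.In e [::]) => match F with end) (conj erefl erefl)))))).
have Hex : forall p : formula L U, exists r, H (ind p, r) by move=> p; apply: Hdom; apply: bdd_ind.
pose om p := proj1_sig (constructive_indefinite_description _ (Hex p)).
have Hom : forall p, H (ind p, om p) by move=> p; rewrite /om; case: constructive_indefinite_description.
have [W2 [W3 [_ W5]]] := VH.
exists om; split; [|split].
- move=> V P; split; [|split; [|split]].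
  + move=> p q _ _ E; apply: (valid_fun VH (Hom p)); rewrite (ind_equiv E); exact: Hom.
  + move=> p _; have := W5 _ _ 0 (W3 _ _ (-1) (Hom p)) ltac:(move=> x; have := ind_01 p x; lra).
    lra.
  + have E : ind (Top L U) = (fun _ => 1).
      by apply: functional_extensionality => s; rewrite ind_T.
    have A := Hom (Top L U); rewrite E in A.
    have := W5 _ _ 1 A ltac:(move=> x; lra).
    have := W5 _ _ (-1) (W3 _ _ (-1) A) ltac:(move=> x; lra).
    lra.
  + move=> p q _ _ D.
    have E : ind (Or p q) = (fun s => ind p s + ind q s).
      apply: functional_extensionality => s.
      have Ds : ~ (sat s p /\ sat s q) by move=> Hpq; have := proj1 (D s) Hpq.
      case: (classic (sat s p)) => Hp; case: (classic (sat s q)) => Hq.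
      * tauto.
      * rewrite ind_T ?(ind_T Hp) ?(ind_F Hq); [lra| move=> /= [Hn _]; tauto].
      * rewrite ind_T ?(ind_F Hp) ?(ind_T Hq); [lra| move=> /= [_ Hn]; tauto].
      * rewrite ind_F ?(ind_F Hp) ?(ind_F Hq); [lra| move=> /= Hn; apply: Hn; tauto].
    apply: (valid_fun VH (Hom (Or p q))); rewrite E; exact: W2.
- move=> p Hp; apply: (valid_fun VH (Hom p)).
  have -> : ind p = (fun s => ev [:: (1, p)] s + ev [::] s).
    by apply: functional_extensionality => s /=; lra.
  have -> : m1 p = val m1 [:: (1, p)] + val m2 [::] by rewrite /=; lra.
  apply: G0H; exists [:: (1, p)], [::]; split; last split=> //.
  by move=> e [<-|].
- move=> p Hp; apply: (valid_fun VH (Hom p)).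
  have -> : ind p = (fun s => ev [::] s + ev [:: (1, p)] s).
    by apply: functional_extensionality => s /=; lra.
  have -> : m2 p = val m1 [::] + val m2 [:: (1, p)] by rewrite /=; lra.
  apply: G0H; exists [::], [:: (1, p)]; split=> //; split=> //.
  by move=> e [<-|].
Qed.

Lemma marg_eq {L : language} {U : structure L} V X Y (B : U -> Prop) (om : formula L U -> R) p :
  is_measure V B om -> (forall v, v \in X -> v \in V) -> (forall v, v \in Y -> v \in V) ->
  inL X B p -> marg om Y p = om p.
Proof.
move=> Hm HX HY Hp; rewrite /marg; apply: (meas_eq Hm).
- have [H1 H2] := inL_alleq Y Hp; split=> // v /H1; rewrite mem_cat => /orP [/HX|/HY] //.
- exact: inL_mono Hp.
- by move=> s /=; have := alleq_sat Y s; tauto.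
Qed.

Lemma inL_meet {L : language} {U : structure L} X1 X2 (B1 B2 : U -> Prop) (p : formula L U) :
  inL X1 B1 p -> inL X2 B2 p -> inL X2 B1 p.
Proof. by move=> [_ H1] [H2 _]. Qed.

Ltac subl := let v := fresh in let Hv := fresh in
  first [ by [] | move=> v; rewrite ?mem_cat; (try case/orP); move=> Hv; rewrite Hv ?orbT ?orTb //].

Lemma setT_sub {L : language} {U : structure L} (A : U -> Prop) : forall u, A u -> @setT_U L U u.
Proof. by []. Qed.

Theorem proposition3p12 (L : language) (U : structure L) (K : Type)
    (A : U -> Prop) (x y z : seq nat) (mu nu eta : formula L U -> R) :
  monster U K ->
  small K A ->
  uniq x -> uniq y -> uniq z ->
  (forall v, v \in x -> v \notin y) ->
  (forall v, v \in x -> v \notin z) ->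
  (forall v, v \in y -> v \notin z) ->
  is_measure x (@setT_U L U) mu ->
  is_measure y (@setT_U L U) nu ->
  is_measure z (@setT_U L U) eta ->
  geqE A x mu y nu ->
  geqE A y nu z eta ->
  geqE A x mu z eta.
Proof.
move=> _ _ _ _ _ Dxy Dxz Dyz Hmu Hnu Heta [lam1 [Hl1m [Hl1x H1]]] [lam2 [Hl2m [Hl2y H2]]].
have Sx : forall v, v \in x -> v \in x ++ y by subl.
have Sy : forall v, v \in y -> v \in x ++ y by subl.
have Sy' : forall v, v \in y -> v \in y ++ z by subl.
have Sz' : forall v, v \in z -> v \in y ++ z by subl.
have L1 : forall p, inL x A p -> lam1 p = mu p.
  move=> p Hp; rewrite -(marg_eq (V := x ++ y) (Y := y) Hl1m Sx Sy Hp); exact: Hl1x.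
have L2 : forall p, inL y A p -> lam2 p = nu p.
  move=> p Hp; rewrite -(marg_eq (V := y ++ z) (Y := z) Hl2m Sy' Sz' Hp); exact: Hl2y.
have [om1 [G1 [E1a E1b]]] := amalgam (@setT_sub L U A) Hl1m Hmu
  (fun p H H' => L1 p (inL_meet H H')).
have N1 : forall p, inL y (@setT_U L U) p -> om1 p = nu p.
  have := H1 om1 (G1 _ _) E1a.
  have M : meq x (@setT_U L U) (marg om1 y) mu.
    move=> p Hp; rewrite (marg_eq (V := x ++ y) (G1 _ _) Sx Sy Hp); exact: E1b.
  move=> /(_ M) N p Hp; rewrite -(marg_eq (V := x ++ y) (Y := x) (G1 _ _) Sy Sx Hp); exact: N.
have Agr2 : forall p, inL (y ++ z) A p -> inL (x ++ y) (@setT_U L U) p -> lam2 p = om1 p.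
  move=> p Hp Hp'.
  have Hy : inL y A p.
    split; last exact: (proj2 Hp).
    move=> v Hv; have := proj1 Hp v Hv; have := proj1 Hp' v Hv; rewrite !mem_cat.
    case/orP=> [Hx|->] //; case/orP=> [->|Hz] //.
    by have := Dxz v Hx; rewrite Hz.
  rewrite L2 // N1 //; exact: inL_mono Hy.
have [oms [Gs [Esa Esb]]] := amalgam (@setT_sub L U A) Hl2m (G1 _ _) Agr2.
exists oms; split; first exact: Gs.
have Smu : forall p, inL x (@setT_U L U) p -> oms p = mu p.
  move=> p Hp; rewrite Esb; [exact: E1b| exact: inL_mono Hp].
split.
  move=> p Hp; rewrite (marg_eq (V := x ++ z) (Gs _ _) _ _ Hp); try subl.
  apply: Smu; exact: inL_mono Hp.
move=> om Hom Homs Homu.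
have Omu : forall p, inL x (@setT_U L U) p -> om p = mu p.
  move=> p Hp; rewrite -(marg_eq (V := x ++ z) (Y := z) Hom _ _ Hp); try subl; exact: Homu.
have Agr3 : forall p, inL (x ++ y ++ z) A p -> inL (x ++ z) (@setT_U L U) p -> oms p = om p.
  move=> p Hp Hp'; symmetry; apply: Homs; exact: inL_meet Hp Hp'.
have [om' [G' [E'a E'b]]] := amalgam (@setT_sub L U A) (Gs _ _) Hom Agr3.
have N2 : forall p, inL y (@setT_U L U) p -> om' p = nu p.
  have := H1 om' (G' _ _).
  have M1 : meq (x ++ y) A om' lam1.
    move=> p Hp; rewrite E'a; last by apply: inL_mono Hp; subl.
    rewrite Esb; last by apply: inL_mono Hp.
    exact: E1a.
  have M2 : meq x (@setT_U L U) (marg om' y) mu.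
    move=> p Hp; rewrite (marg_eq (V := x ++ y) (G' _ _) Sx Sy Hp) E'b; last by apply: inL_mono Hp; subl.
    exact: Omu.
  move=> /(_ M1 M2) N p Hp; rewrite -(marg_eq (V := x ++ y) (Y := x) (G' _ _) Sy Sx Hp); exact: N.
have N3 : forall p, inL z (@setT_U L U) p -> om' p = eta p.
  have := H2 om' (G' _ _).
  have M1 : meq (y ++ z) A om' lam2.
    move=> p Hp; rewrite E'a; last by apply: inL_mono Hp; subl.
    rewrite Esa //.
  have M2 : meq y (@setT_U L U) (marg om' z) nu.
    move=> p Hp; rewrite (marg_eq (V := y ++ z) (G' _ _) Sy' Sz' Hp); exact: N2.
  move=> /(_ M1 M2) N p Hp; rewrite -(marg_eq (V := y ++ z) (Y := y) (G' _ _) Sz' Sy' Hp); exact: N.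
move=> p Hp.
rewrite (marg_eq (V := x ++ z) Hom _ _ Hp); try subl.
rewrite -E'b; last by apply: inL_mono Hp; subl.
exact: N3.
Qed.
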